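(* Let $K$ be a finite field of characteristic $p$ and order $q$, let $s$ be a positive integer with $\gcd(s,q-1)=1$, let $k$ be a positive integer with $p\equiv1\pmod k$, let $\lambda$ be a primitive $k$th root of unity in $\mathbb{F}_p^\times$, and for $u\in K^\times$ let $\Omega_u=\sum_{i=0}^{k-1}W_{\lambda^iu}$. Then (i) $\sum_{u\in K^\times}\Omega_u^0=q-1$; (ii) $\sum_{u\in K^\times}\Omega_u=kq$; (iii) $\sum_{u\in K^\times}\Omega_u^2=kq^2$; (iv) if $k=2$, then $\sum_{u\in K^\times}\Omega_u^3=2q^2\big(V^{[1,1]}_1+3V^{[1,1]}_{-1}\big)$.
   Context: $\zeta=\exp(2\pi i/p)$, $\psi(x)=\zeta^{\mathrm{Tr}(x)}$ with $\mathrm{Tr}$ the absolute trace of $K$ to $\mathbb{F}_p$; $W_u=\sum_{x\in K}\psi(x^s-ux)$. Let $1/s$ denote the inverse of $s$ modulo $q-1$. For $a,b\in K$, $Q^{(1,1)}_{a,b}$ is the number of $(v_1,v_2)\in K^2$ with $v_1+v_2=a$ and $(v_1^s+v_2^s)^{1/s}=b$, and $V^{[1,1]}_u=Q^{(1,1)}_{1,u}-Q^{(1,1)}_{1,0}$ for $u\in K^\times$. *)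

(* Defs.v *)
From mathcomp Require Import all_boot all_order all_algebra all_field.
Set Implicit Arguments. Unset Strict Implicit. Unset Printing Implicit Defensive.
Import GRing.Theory Num.Theory.
Local Open Scope ring_scope.

(* zeta = exp(2 pi i / p), realised in algC: p.-root (-1) is exp(i pi / p)
   (the root of -1 of minimal nonnegative argument), so its square is
   exp(2 pi i / p). *)
Definition zeta (p : nat) : algC := (p.-root (-1)) ^+ 2.

Section Defs.
Variables (K : finFieldType) (p : nat).

Definition absTr (x : K) : K := \sum_(i < logn p #|K|) x ^+ (p ^ i).

Definition trnat (x : K) : nat :=
  odflt 0%N (omap val [pick m : 'I_p | (m%:R : K) == absTr x]).

Definition psi (x : K) : algC := zeta p ^+ trnat x.

Definition W (s : nat) (u : K) : algC := \sum_(x : K) psi (x ^+ s - u * x).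

Definition Omega (s k : nat) (lam u : K) : algC :=
  \sum_(i < k) W s (lam ^+ i * u).

(* 1/s : the inverse of s modulo q-1, taken in {1,..,q-1} (so that x^(1/s)
   is the inverse of the bijection x |-> x^s, also at x = 0) *)
Definition sinv (s : nat) : nat :=
  odflt 1%N (omap val [pick t : 'I_#|K| |
     (0 < t)%N && (s * t == 1 %[mod #|K|.-1])%N]).

Definition Q11 (s : nat) (a b : K) : nat :=
  #|[set v : K * K | (v.1 + v.2 == a) &&
                     ((v.1 ^+ s + v.2 ^+ s) ^+ sinv s == b)]|.

Definition V11 (s : nat) (u : K) : int := (Q11 s 1 u)%:Z - (Q11 s 1 0)%:Z.

End Defs.

(* Main.v *)
Require Import Defs.
From mathcomp Require Import all_boot all_order all_algebra all_field.
From mathcomp Require Import ring.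
Set Implicit Arguments. Unset Strict Implicit. Unset Printing Implicit Defensive.
Import GRing.Theory Num.Theory.
Local Open Scope ring_scope.

Lemma zeta_prim (p : nat) : prime p -> p.-primitive_root (zeta p).
Proof.
move=> pr_p; have p_gt0 := prime_gt0 pr_p; have p_gt1 := prime_gt1 pr_p.
set z := p.-root (-1 : algC).
have zp : z ^+ p = -1 by rewrite /z rootCK.
have zetap : zeta p ^+ p = 1 by rewrite /zeta -exprM mulnC exprM zp sqrrN expr1n.
have [d pd dp] := prim_order_exists p_gt0 zetap.
case/primeP: pr_p => _ /(_ d dp) /orP[/eqP d1|/eqP Hd]; last by rewrite Hd in pd.
subst d; have := prim_expr_order pd; rewrite expr1 /zeta -/z => z2.
have : (z - 1) * (z + 1) = 0 by rewrite -subr_sqr z2 expr1n subrr.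
move/eqP; rewrite mulf_eq0 subr_eq0 addr_eq0 => /orP[] /eqP z1.
  by move: zp; rewrite z1 expr1n => /eqP; rewrite -subr_eq0 opprK -(natrD _ 1 1) pnatr_eq0.
by have := rootC_lt0 (-1 : algC) p_gt1; rewrite -/z z1 ltrN10.
Qed.

Section Fin.
Variables (K : finFieldType) (p : nat).
Hypothesis pK : p \in [pchar K].

Let pr_p : prime p. Proof. exact: pcharf_prime pK. Qed.
Let p_gt1 : (1 < p)%N. Proof. exact: prime_gt1. Qed.

Lemma cardK : #|K| = (p ^ logn p #|K|)%N.
Proof. exact: (card_pprimeChar pK). Qed.

Lemma logn_gt0 : (0 < logn p #|K|)%N.
Proof.
have h2 : (2 <= #|K|)%N.
  have := card2 (1 : K) 0; rewrite oner_neq0 => <-; by apply: subset_leq_card; apply/subsetP.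
move: h2 cardK; case: (logn p #|K|) => // h2 e; by rewrite e expn0 in h2.
Qed.

Lemma frobX (x y : K) i : (x + y) ^+ (p ^ i) = x ^+ (p ^ i) + y ^+ (p ^ i).
Proof.
elim: i => [|i IH]; first by rewrite !expr1.
by rewrite expnSr !exprM IH -!(pFrobenius_autE pK) rmorphD.
Qed.

Lemma absTrD (x y : K) : absTr p (x + y) = absTr p x + absTr p y.
Proof. by rewrite /absTr -big_split; apply: eq_bigr => i _; rewrite frobX. Qed.

Lemma absTr0 : absTr p (0 : K) = 0.
Proof. by rewrite /absTr big1 // => i _; rewrite expr0n expn_eq0 -[p == 0%N]negbK -lt0n prime_gt0. Qed.

Lemma absTrX (x : K) : absTr p x ^+ p = absTr p x.
Proof.
rewrite /absTr -(pFrobenius_autE pK) rmorph_sum /=.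
under eq_bigr => i _ do rewrite (pFrobenius_autE pK) -exprM -expnSr.
have := logn_gt0; case En: (logn p #|K|) => [//|n] _.
rewrite big_ord_recr big_ord_recl /= addrC; congr (_ + _).
by rewrite -En -cardK expf_card expn0 expr1.
Qed.

Lemma nat_eq_mod (a b : nat) : (a%:R == b%:R :> K) = (a == b %[mod p])%N.
Proof.
wlog le_ab : a b / (a <= b)%N.
  move=> IH; case: (leqP a b) => [|/ltnW] h; first exact: IH.
  by rewrite eq_sym IH // eq_sym.
rewrite eq_sym [(a == _ %[mod p])%N]eq_sym eqn_mod_dvd // (dvdn_pcharf pK) natrB //.
by rewrite subr_eq0.
Qed.

Lemma primefield (t : K) : t ^+ p = t -> exists m : 'I_p, m%:R = t.
Proof.
move=> tp; case: (pickP (fun m : 'I_p => m%:R == t)) => [m /eqP e|none]; first by exists m.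
exfalso.
pose P : {poly K} := 'X^p - 'X.
have sP : size P = p.+1.
  rewrite /P size_polyDl ?size_polyXn // size_polyN size_polyX ltnS //.
have P0 : P != 0 by rewrite -size_poly_eq0 sP.
pose rs := t :: [seq (val m)%:R | m <- enum 'I_p].
suff [h1 h2] : all (root P) rs /\ uniq rs.
  by have := max_poly_roots P0 h1 h2; rewrite sP /= size_map size_enum_ord ltnn.
split.
- apply/allP => y; rewrite /root /P !hornerE.
  rewrite inE => /orP[/eqP -> | /mapP[m _ ->]]; first by rewrite tp subrr.
  by rewrite -(pFrobenius_autE pK) rmorph_nat subrr.
- rewrite /= map_inj_uniq ?enum_uniq ?andbT.
    by apply/mapP => -[m _ e]; move: (none m); rewrite e eqxx.
  move=> m m' /eqP; rewrite nat_eq_mod !modn_small // => /eqP e.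
  exact: val_inj.
Qed.

Lemma trnatP (x : K) : (trnat p x < p)%N /\ (trnat p x)%:R = absTr p x.
Proof.
rewrite /trnat; case: pickP => [m /eqP Hm | none] /=; first by rewrite Hm.
have [m Hm] := primefield (absTrX x).
by move: (none m); rewrite Hm eqxx.
Qed.

Lemma trnat_mod (x : K) : (trnat p x %% p)%N = trnat p x.
Proof. by rewrite modn_small //; case: (trnatP x). Qed.

Let zp := zeta_prim pr_p.

Lemma psi0 : psi p (0 : K) = 1.
Proof.
rewrite /psi; case: (trnatP 0) => lt; rewrite absTr0 => /eqP.
rewrite -(dvdn_pcharf pK) => /dvdnP[c e].
suff -> : trnat p (0 : K) = 0%N by rewrite expr0.
by move: lt; rewrite e; case: c {e} => // c; rewrite mulSn -ltn_subRL subnn.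
Qed.

Lemma psiD (x y : K) : psi p (x + y) = psi p x * psi p y.
Proof.
rewrite /psi -exprD; apply/eqP; rewrite (eq_prim_root_expr zp) -nat_eq_mod natrD.
by case: (trnatP (x + y)) => _ ->; case: (trnatP x) => _ ->; case: (trnatP y) => _ ->; rewrite absTrD.
Qed.

Lemma absTr_nontriv : exists y : K, absTr p y != 0.
Proof.
case: (pickP (fun y : K => absTr p y != 0)) => [y Hy|none]; first by exists y.
exfalso.
have := logn_gt0; have := cardK; case En: (logn p #|K|) => [//|n] cK _.
pose P : {poly K} := \sum_(i < n.+1) 'X^(p ^ i).
have coefP j : P`_j = \sum_(i < n.+1) (j == p ^ i)%N%:R.
  by rewrite /P coef_sum; apply: eq_bigr => i _; rewrite coefXn.
have P0 : P != 0.
  apply/eqP => /(congr1 (fun P : {poly K} => P`_(p ^ n)%N)); rewrite coefP coef0.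
  rewrite (bigD1 ord_max) //= eqxx big1 ?addr0; first by move/eqP; rewrite oner_eq0.
  move=> i ne.
  rewrite eqn_exp2l // eq_sym; case: eqP => // e; move: ne; suff -> : i = ord_max by rewrite eqxx.
  exact: val_inj.
have sP : (size P <= (p ^ n).+1)%N.
  apply/leq_sizeP => j lej; rewrite coefP big1 // => i _.
  case: eqP => // e; move: lej; rewrite e ltnNge leq_pexp2l ?prime_gt0 //.
  by rewrite -ltnS ltn_ord.
have rt : all (root P) (enum K).
  apply/allP => y _; rewrite /root /P horner_sum.
  have e := negbFE (none y); rewrite /absTr En in e; apply/eqP; rewrite -[X in _ = X](eqP e).
  by apply: eq_bigr => i _; rewrite hornerXn.
have := max_poly_roots P0 rt (enum_uniq _).
rewrite -cardE cK => /leq_trans /(_ sP); rewrite ltnS leq_exp2l // ltnn //.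
Qed.

Lemma sum_psi : \sum_(x : K) psi p x = 0.
Proof.
have [y Hy] := absTr_nontriv.
have py : psi p y != 1.
  rewrite /psi -(expr0 (zeta p)) (eq_prim_root_expr zp) mod0n trnat_mod.
  by apply: contra Hy => /eqP e; case: (trnatP y) => _ <-; rewrite e.
have : \sum_(x : K) psi p x = psi p y * \sum_(x : K) psi p x.
  rewrite {1}(reindex_inj (addrI y)) mulr_sumr; apply: eq_bigr => x _; exact: psiD.
move/eqP; rewrite -subr_eq0 -{1}(mul1r (\sum_x _)) -mulrBl mulf_eq0 subr_eq0 eq_sym (negbTE py).
by move/eqP.
Qed.

Lemma orth (c : K) : \sum_(x : K) psi p (c * x) = if c == 0 then (#|K|)%:R else 0.
Proof.
case: eqP => [->|/eqP c0].
  under eq_bigr => x _ do rewrite mul0r psi0.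
  rewrite sumr_const.
  by [].
by rewrite -[RHS]sum_psi [RHS](reindex_inj (mulfI c0)).
Qed.
End Fin.

Section Pow.
Variables (K : finFieldType) (s : nat).
Hypotheses (s_gt0 : (0 < s)%N) (cop : coprime s #|K|.-1).

Lemma card_gt1 : (1 < #|K|)%N.
Proof. by have := card2 (1 : K) 0; rewrite oner_neq0 => <-; apply: subset_leq_card; apply/subsetP. Qed.

Lemma unitM (x : K) : x != 0 -> x ^+ #|K|.-1 = 1.
Proof.
move=> x0; apply: (mulfI x0); rewrite mulr1 -exprS prednK ?expf_card //.
exact: ltnW card_gt1.
Qed.

Lemma sinv_ex : exists t : 'I_#|K|, (0 < t)%N && (s * t == 1 %[mod #|K|.-1])%N.
Proof.
have M0 : (0 < #|K|.-1)%N by rewrite -ltnS prednK ?card_gt1 // ltnW // card_gt1.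
case: (egcdnP #|K|.-1 s_gt0) => km kn e _; move: e; rewrite (eqP cop) => e.
have km0 : (0 < km)%N by case: km e => //; rewrite mul0n addn1.
have lt : (((km.-1) %% #|K|.-1).+1 < #|K|)%N.
  by rewrite -[X in (_ < X)%N](prednK (ltnW card_gt1)) ltnS ltn_pmod.
exists (Ordinal lt) => /=.
apply/eqP.
rewrite mulnS addnC -modnDml modnMmr modnDml addnC -mulnS prednK // mulnC e.
by rewrite -modnDml modnMl add0n.
Qed.

Lemma sinvP (x : K) : x ^+ (s * sinv K s) = x.
Proof.
rewrite /sinv; case: pickP => [t /andP[t0 /eqP tm] | none] /=; last first.
  by have [t /andP[t0 tm]] := sinv_ex; move: (none t); rewrite t0 tm.
have [->|x0] := eqVneq x 0; first by rewrite expr0n muln_eq0 -!leqn0 leqNgt s_gt0 leqNgt t0.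
by rewrite -(expr_mod _ (unitM x0)) tm expr_mod ?expr1 // unitM.
Qed.

Lemma powinj : injective (fun x : K => x ^+ s).
Proof. by move=> x y /= e; rewrite -(sinvP x) -(sinvP y) !exprM e. Qed.

Lemma sinv_eq (w b : K) : (w ^+ sinv K s == b) = (w == b ^+ s).
Proof.
apply/eqP/eqP => [<-|->]; first by rewrite -exprM mulnC sinvP.
by rewrite -exprM sinvP.
Qed.

Lemma negpow : (-1 : K) ^+ s = -1.
Proof.
case: (boolP (odd s)) => [o|e]; first by rewrite -signr_odd o expr1.
have : (-1 : K) ^+ s = 1 ^+ s by rewrite -signr_odd (negbTE e) expr1n.
by move/powinj => ->; rewrite expr1n.
Qed.

Lemma sumpow (F : K -> algC) : \sum_(x : K) F (x ^+ s) = \sum_(x : K) F x.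
Proof. by rewrite [RHS](reindex_inj powinj). Qed.

End Pow.

Lemma single (T : finType) (F : T -> algC) (y0 : T) :
  \sum_(x : T) (if x == y0 then F x else 0) = F y0.
Proof. by rewrite -big_mkcond big_pred1_eq. Qed.

Section Main.
Variables (K : finFieldType) (p s : nat).
Hypotheses (pK : p \in [pchar K]) (s_gt0 : (0 < s)%N) (cop : coprime s #|K|.-1).

Local Notation ps := (@psi K p).
Local Notation q := (#|K|%:R : algC).

Lemma W_expand (c u : K) :
  W p s (c * u) = \sum_(x : K) ps (x ^+ s) * ps (- (c * x) * u).
Proof. by apply: eq_bigr => x _; rewrite -psiD //; congr psi; ring. Qed.

Lemma W0 : W p s (0 : K) = 0.
Proof.
rewrite /W; under eq_bigr do rewrite mul0r subr0.
by rewrite (sumpow s_gt0 cop (fun x => ps x)) sum_psi.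
Qed.

Lemma psiM (t1 t2 u : K) : ps (- t1 * u) * ps (- t2 * u) = ps (- (t1 + t2) * u).
Proof. by rewrite -psiD //; congr psi; ring. Qed.

Lemma sumW (c : K) : c != 0 -> \sum_(u : K) W p s (c * u) = q.
Proof.
move=> c0; under eq_bigr do rewrite W_expand.
rewrite exchange_big /=.
under eq_bigr => x _ do rewrite -mulr_sumr (orth pK) oppr_eq0 mulf_eq0 (negbTE c0) /=.
rewrite (eq_bigr (fun x => if x == 0 then q else 0)) ?single //.
by move=> x _; case: eqP => [->|]; rewrite ?mulr0 // expr0n eqn0Ngt s_gt0 psi0 // mul1r.
Qed.

Lemma sum2 (a b : K) : \sum_(u : K) W p s (a * u) * W p s (b * u) =
  \sum_(x : K) \sum_(y : K) ps (x ^+ s) * ps (y ^+ s) * (if a * x + b * y == 0 then q else 0).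
Proof.
under eq_bigr => u _ do rewrite !W_expand big_distrlr /=.
rewrite exchange_big; apply: eq_bigr => x _; rewrite exchange_big; apply: eq_bigr => y _.
rewrite -oppr_eq0 -(orth pK) mulr_sumr; apply: eq_bigr => u _.
by rewrite -psiM //; ring.
Qed.

Lemma condlin (w b y : K) : b != 0 -> (w + b * y == 0) = (y == - w / b).
Proof.
move=> b0; apply/eqP/eqP => [e|->]; last by rewrite mulrC divfK // subrr.
apply: (mulfI b0); rewrite [RHS]mulrC divfK //; apply/eqP; by rewrite -addr_eq0 addrC e.
Qed.

Lemma condab (a b : K) : b != 0 -> (1 + (- a / b) ^+ s == 0) = (a == b).
Proof.
move=> b0; rewrite addrC addr_eq0 -(negpow s_gt0 cop) (inj_eq (powinj s_gt0 cop)).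
apply/eqP/eqP => [e|->]; last by rewrite mulNr divff.
have := congr1 (fun z => - z * b) e; rewrite /= mulNr opprK divfK // opprK mul1r; apply.
Qed.

Lemma pair2 (a b : K) : b != 0 ->
  \sum_(u : K) W p s (a * u) * W p s (b * u) = if a == b then q ^+ 2 else 0.
Proof.
move=> b0; rewrite sum2.
transitivity (\sum_(x : K) ps ((1 + (- a / b) ^+ s) * x ^+ s) * q).
  apply: eq_bigr => x _.
  rewrite (eq_bigr (fun y => if y == - (a * x) / b then ps (x ^+ s) * ps (y ^+ s) * q else 0)); last first.
    by move=> y _; rewrite condlin //; case: eqP => _; rewrite ?mulr0.
  rewrite single -psiD //; congr (ps _ * _).
  rewrite (_ : - (a * x) / b = (- a / b) * x); last by ring.
  by rewrite exprMn; ring.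
rewrite -mulr_suml (sumpow s_gt0 cop (fun y => ps ((1 + (- a / b) ^+ s) * y))) (orth pK).
by rewrite condab //; case: eqP => _; rewrite ?mul0r.
Qed.

Lemma sum3 (a b c : K) : c != 0 ->
  \sum_(u : K) W p s (a * u) * W p s (b * u) * W p s (c * u) =
  q * \sum_(x : K) \sum_(y : K) ps (x ^+ s) * ps (y ^+ s) * ps ((- (a * x + b * y) / c) ^+ s).
Proof.
move=> c0.
transitivity (\sum_(u : K) \sum_(x : K) \sum_(y : K) \sum_(z : K)
   ps (x ^+ s) * ps (y ^+ s) * ps (z ^+ s) * ps (- (a * x + b * y + c * z) * u)).
  apply: eq_bigr => u _; rewrite !W_expand big_distrlr /= mulr_suml; apply: eq_bigr => x _.
  rewrite mulr_suml; apply: eq_bigr => y _; rewrite mulr_sumr; apply: eq_bigr => z _.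
  by rewrite -!psiM //; ring.
rewrite mulr_sumr exchange_big; apply: eq_bigr => x _.
rewrite mulr_sumr exchange_big; apply: eq_bigr => y _.
rewrite exchange_big /=.
rewrite (eq_bigr (fun z => if z == - (a * x + b * y) / c then
   ps (x ^+ s) * ps (y ^+ s) * ps (z ^+ s) * q else 0)).
  by rewrite single mulrC.
move=> z _; rewrite -mulr_sumr (orth pK) oppr_eq0 condlin //.
by case: eqP => _; rewrite ?mulr0.
Qed.

Lemma Fe (e : K) :
  \sum_(x : K) \sum_(y : K) ps (x ^+ s) * ps (y ^+ s) * ps (e * (x + y) ^+ s) =
  q * \sum_(v : K) ((v ^+ s + (1 - v) ^+ s + e == 0)%:R).
Proof.
transitivity (\sum_(x : K) \sum_(w : K)
   ps (x ^+ s) * ps ((- x + w) ^+ s) * ps (e * (x + (- x + w)) ^+ s)).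
  by apply: eq_bigr => x _; rewrite (reindex_inj (addrI (- x))).
rewrite exchange_big /=.
transitivity (\sum_(w : K) \sum_(v : K) ps (w ^+ s * (v ^+ s + (1 - v) ^+ s + e))).
  apply: eq_bigr => w _; case: (eqVneq w 0) => [->|w0].
    transitivity (\sum_(x : K) (1 : algC)).
      apply: eq_bigr => x _.
      rewrite addr0 subrr expr0n eqn0Ngt s_gt0 /= mulr0 psi0 // mulr1 -psiD //.
      by rewrite exprNn (negpow s_gt0 cop) mulN1r subrr psi0.
    apply: eq_bigr => v _.
    by rewrite expr0n eqn0Ngt s_gt0 /= mul0r psi0.
  rewrite (reindex_inj (mulfI w0)) /=; apply: eq_bigr => v _.
  have -> : - (w * v) + w = w * (1 - v) by ring.
  have -> : w * v + w * (1 - v) = w by ring.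
  by rewrite -!psiD //; congr psi; rewrite !exprMn; ring.
rewrite exchange_big mulr_sumr; apply: eq_bigr => v _.
under eq_bigr do rewrite mulrC.
rewrite (sumpow s_gt0 cop (fun y => ps ((v ^+ s + (1 - v) ^+ s + e) * y))) (orth pK).
by case: eqP => _; rewrite ?mulr1 ?mulr0.
Qed.

Lemma Q11E (b : K) : ((Q11 s 1 b)%:R : algC) =
  \sum_(v : K) ((v ^+ s + (1 - v) ^+ s == b ^+ s)%:R).
Proof.
rewrite /Q11.
set A := [set _ | _].
have -> : (#|A|%:R : algC) = \sum_(v : K * K)
    (((v.1 + v.2 == 1) && ((v.1 ^+ s + v.2 ^+ s) ^+ sinv K s == b))%:R).
  rewrite -sum1_card natr_sum big_mkcond; apply: eq_bigr => v _; rewrite inE.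
  by case: (_ && _).
rewrite -(pair_bigA _ (fun i j =>
   (((i + j == 1) && ((i ^+ s + j ^+ s) ^+ sinv K s == b))%:R : algC))) /=.
apply: eq_bigr => i _.
rewrite (eq_bigr (fun j => if j == 1 - i then
    (((i ^+ s + j ^+ s) ^+ sinv K s == b))%:R else 0)).
  by rewrite single (sinv_eq s_gt0 cop).
move=> j _; have -> : (i + j == 1) = (j == 1 - i).
  by apply/eqP/eqP => [<-|->]; [rewrite addrC addKr | rewrite addrC subrK].
by case: eqP.
Qed.

Lemma Q0 : Q11 s 1 (0 : K) = 0%N.
Proof.
apply/eqP; rewrite -(pnatr_eq0 algC) Q11E; apply/eqP; apply: big1 => v _.
rewrite expr0n eqn0Ngt s_gt0 /= addr_eq0 -mulN1r -(negpow s_gt0 cop) -exprMn.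
rewrite (inj_eq (powinj s_gt0 cop)) mulN1r opprB -subr_eq0.
have -> : v - (v - 1) = 1 by ring.
by rewrite oner_eq0.
Qed.

Lemma A3 : \sum_(u : K) W p s u ^+ 3 = q * (q * (Q11 s 1 (1 : K))%:R).
Proof.
transitivity (\sum_(u : K) W p s (1 * u) * W p s (1 * u) * W p s (1 * u)).
  by apply: eq_bigr => u _; rewrite mul1r; ring.
rewrite sum3 ?oner_neq0 // Q11E.
have -> : \sum_(v : K) ((v ^+ s + (1 - v) ^+ s == 1 ^+ s)%:R : algC) =
          \sum_(v : K) ((v ^+ s + (1 - v) ^+ s + -1 == 0)%:R : algC).
  by apply: eq_bigr => v _; rewrite expr1n subr_eq0.
rewrite -Fe; congr (_ * _).
apply: eq_bigr => x _; apply: eq_bigr => y _.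
by rewrite !mul1r divr1 exprNn (negpow s_gt0 cop) mulN1r.
Qed.

Lemma B3 : \sum_(u : K) W p s u ^+ 2 * W p s (- u) = q * (q * (Q11 s 1 (-1 : K))%:R).
Proof.
transitivity (\sum_(u : K) W p s (1 * u) * W p s (1 * u) * W p s (-1 * u)).
  by apply: eq_bigr => u _; rewrite mul1r mulN1r; ring.
rewrite sum3 ?oppr_eq0 ?oner_neq0 // Q11E.
have -> : \sum_(v : K) ((v ^+ s + (1 - v) ^+ s == (-1) ^+ s)%:R : algC) =
          \sum_(v : K) ((v ^+ s + (1 - v) ^+ s + 1 == 0)%:R : algC).
  by apply: eq_bigr => v _; rewrite (negpow s_gt0 cop) addr_eq0.
rewrite -Fe; congr (_ * _).
apply: eq_bigr => x _; apply: eq_bigr => y _.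
by rewrite !mul1r invrN1 mulrN1 opprK.
Qed.
End Main.

Unset Implicit Arguments.
Theorem lemma5p17 (K : finFieldType) (p : nat) (s k : nat) (lam : K) :
  p \in [pchar K] ->
  (0 < s)%N -> coprime s #|K|.-1 ->
  (0 < k)%N -> p = 1 %[mod k] ->
  k.-primitive_root lam ->
  let q := #|K| in
  let Om := Omega p s k lam in
  [/\ \sum_(u : K | u != 0) Om u ^+ 0 = (q.-1)%:R,
      \sum_(u : K | u != 0) Om u = (k * q)%:R,
      \sum_(u : K | u != 0) Om u ^+ 2 = (k * q ^ 2)%:R
    & k = 2%N ->
      \sum_(u : K | u != 0) Om u ^+ 3 =
        (2 * q ^ 2)%:R * ((V11 s (1 : K) + 3 * V11 s (-1 : K))%:~R)].
Proof.
move=> pK s0 cop k0 _ prim q Om.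
have lam0 : lam != 0.
  apply/eqP => l0; have := prim_expr_order prim; rewrite l0 expr0n eqn0Ngt k0 /=.
  by move/eqP; rewrite eq_sym oner_eq0.
have Om0 : Om 0 = 0.
  by rewrite /Om /Omega big1 // => i _; rewrite mulr0 W0.
have strip n : (0 < n)%N -> \sum_(u : K | u != 0) Om u ^+ n = \sum_(u : K) Om u ^+ n.
  by move=> n0; rewrite [RHS](bigD1 0) //= Om0 expr0n eqn0Ngt n0 add0r.
split.
- under eq_bigr do rewrite expr0.
  by rewrite sumr_const -(cardC1 (0 : K)).
- transitivity (\sum_(u : K | u != 0) Om u ^+ 1); first by apply: eq_bigr => u _; rewrite expr1.
  rewrite strip //; under eq_bigr do rewrite expr1.
  rewrite /Om /Omega exchange_big /=.
  rewrite (eq_bigr (fun _ => q%:R)); last by move=> i _; rewrite sumW // expf_neq0.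
  by rewrite sumr_const card_ord natrM mulr_natl.
- rewrite strip // /Om /Omega.
  under eq_bigr do rewrite expr2 big_distrlr /=.
  rewrite exchange_big /=.
  have ce (i j : 'I_k) : (lam ^+ i == lam ^+ j) = (j == i).
    by rewrite (eq_prim_root_expr prim) !modn_small // eq_sym.
  rewrite (eq_bigr (fun _ => (q%:R : algC) ^+ 2)).
    by rewrite sumr_const card_ord natrM natrX mulr_natl.
  move=> i _; rewrite exchange_big /=.
  rewrite (eq_bigr (fun j : 'I_k => if j == i then (q%:R : algC) ^+ 2 else 0)) ?single //.
  by move=> j _; rewrite pair2 ?expf_neq0 // ce.
- move=> k2; rewrite strip //; subst k.
  have l1 : lam = -1.
    have : (lam - 1) * (lam + 1) = 0 by rewrite -subr_sqr (prim_expr_order prim) expr1n subrr.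
    move/eqP; rewrite mulf_eq0 subr_eq0 addr_eq0 => /orP[/eqP l1|/eqP //].
    by have := eq_prim_root_expr prim 1 0; rewrite l1 expr1n eqxx.
  have OmE u : Om u = W p s u + W p s (- u).
    by rewrite /Om /Omega !big_ord_recl big_ord0 /= expr0 l1 mul1r mulN1r addr0.
  under eq_bigr do rewrite OmE.
  transitivity (\sum_(u : K) W p s u ^+ 3 + 3 * \sum_(u : K) W p s u ^+ 2 * W p s (- u)
     + 3 * \sum_(u : K) W p s u * W p s (- u) ^+ 2 + \sum_(u : K) W p s (- u) ^+ 3).
    by rewrite !mulr_sumr -!big_split /=; apply: eq_bigr => u _; ring.
  have C3 : \sum_(u : K) W p s u * W p s (- u) ^+ 2 = \sum_(u : K) W p s u ^+ 2 * W p s (- u).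
    by rewrite [LHS](reindex_inj oppr_inj) /=; apply: eq_bigr => u _; rewrite opprK mulrC.
  have D3 : \sum_(u : K) W p s (- u) ^+ 3 = \sum_(u : K) W p s u ^+ 3.
    by rewrite [LHS](reindex_inj oppr_inj) /=; apply: eq_bigr => u _; rewrite opprK.
  rewrite C3 D3 A3 // B3 // /V11 Q0 // !subr0 intrD intrM -!pmulrn /q natrM natrX.
  ring.
Qed.
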